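(* Let $\mathcal{F}_2$ be the ($5$-dimensional) space of framed $2$-gons and let $\mathcal D$ be the distribution on $\mathcal{F}_2$ consisting of those infinitesimal motions for which the velocity of $B_1$ is parallel to $u_1$ and the velocity of $B_2$ is parallel to $u_2$. Then $\mathcal D$ is bracket generating of type $(3,5)$: it has rank $3$, and at every point of $\mathcal{F}_2$ the values of vector fields tangent to $\mathcal D$ together with their first commutators span the tangent space of $\mathcal F_2$.
   Context: For nonzero vectors $u,v$ in the plane, $\angle(u,v)\in\mathbb{R}/2\pi\mathbb{Z}$ is the angle through which $u$ must be rotated counterclockwise to align with $v$. A framed $2$-gon is a segment $B_1B_2$ with $B_1\neq B_2$ together with unit vectors $u_1$ at $B_1$ and $u_2$ at $B_2$ such that $\angle(u_1,B_2-B_1)=\angle(B_2-B_1,u_2)$; the framings $(u_1,u_2)$ and $(-u_1,-u_2)$ are identified. $\mathcal{F}_2$ is the space of framed $2$-gons; it has coordinates $(x,y,\varphi,r,\alpha)$, where $(x,y)$ is the midpoint of $B_1B_2$, $\varphi$ its direction, $r>0$ its half-length, and $\alpha$ the angle the framing vectors make with the segment. *)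

(* Defs.v *)
From HB Require Import structures.
From mathcomp Require Import all_boot all_order all_algebra.
From mathcomp Require Import all_classical all_reals all_analysis.
Set Implicit Arguments. Unset Strict Implicit. Unset Printing Implicit Defensive.
Import Order.TTheory GRing.Theory Num.Theory.
Import numFieldNormedType.Exports.
Local Open Scope classical_set_scope.
Local Open Scope ring_scope.

(* Points of (the universal cover of) F_2 are rows p = (x, y, phi, r, alpha)
   of 'rV[R]_5 with r > 0; F_2 itself is the quotient by
   phi ~ phi + 2 pi and alpha ~ alpha + pi. *)

Definition i_x : 'I_5 := @Ordinal 5 0 isT.
Definition i_y : 'I_5 := @Ordinal 5 1 isT.
Definition i_phi : 'I_5 := @Ordinal 5 2 isT.
Definition i_r : 'I_5 := @Ordinal 5 3 isT.
Definition i_alpha : 'I_5 := @Ordinal 5 4 isT.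

Definition i0 : 'I_2 := @Ordinal 2 0 isT.
Definition i1 : 'I_2 := @Ordinal 2 1 isT.

Section F2.
Variable R : realType.

Definition coord (i : 'I_5) (p : 'rV[R]_5) : R := p ord0 i.

Definition vec2 (a b : R) : 'rV[R]_2 := \row_(j < 2) (if val j == 0%N then a else b).

Definition cross2 (a b : 'rV[R]_2) : R := a ord0 i0 * b ord0 i1 - a ord0 i1 * b ord0 i0.
Definition parallel (a b : 'rV[R]_2) : Prop := cross2 a b = 0.

Definition F2dom : set 'rV[R]_5 := [set p | 0 < coord i_r p].

Definition B1 (p : 'rV[R]_5) : 'rV[R]_2 :=
  vec2 (coord i_x p - coord i_r p * cos (coord i_phi p))
       (coord i_y p - coord i_r p * sin (coord i_phi p)).
Definition B2 (p : 'rV[R]_5) : 'rV[R]_2 :=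
  vec2 (coord i_x p + coord i_r p * cos (coord i_phi p))
       (coord i_y p + coord i_r p * sin (coord i_phi p)).

(* the framing: angle(u1, B2 - B1) = alpha = angle(B2 - B1, u2) *)
Definition u1 (p : 'rV[R]_5) : 'rV[R]_2 :=
  vec2 (cos (coord i_phi p - coord i_alpha p)) (sin (coord i_phi p - coord i_alpha p)).
Definition u2 (p : 'rV[R]_5) : 'rV[R]_2 :=
  vec2 (cos (coord i_phi p + coord i_alpha p)) (sin (coord i_phi p + coord i_alpha p)).

Definition Dist (p v : 'rV[R]_5) : Prop :=
  parallel ('D_v B1 p) (u1 p) /\ parallel ('D_v B2 p) (u2 p).

Fixpoint iterD (vs : seq 'rV[R]_5) (f : 'rV[R]_5 -> 'rV[R]_5) : 'rV[R]_5 -> 'rV[R]_5 :=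
  if vs is v :: vs' then (fun q => 'D_v (iterD vs' f) q) else f.

Definition smooth_on (U : set 'rV[R]_5) (f : 'rV[R]_5 -> 'rV[R]_5) : Prop :=
  forall (vs : seq 'rV[R]_5) (p : 'rV[R]_5), U p -> differentiable (iterD vs f) p.

Definition unitvec (i : 'I_5) : 'rV[R]_5 := \row_(j < 5) (j == i)%:R.

Definition descends (X : 'rV[R]_5 -> 'rV[R]_5) : Prop :=
  forall p, X (p + (2 * pi) *: unitvec i_phi) = X p /\ X (p + pi *: unitvec i_alpha) = X p.

Definition tangent_to_D (X : 'rV[R]_5 -> 'rV[R]_5) : Prop :=
  [/\ smooth_on F2dom X, descends X & forall p, F2dom p -> Dist p (X p)].

Definition lie (X Y : 'rV[R]_5 -> 'rV[R]_5) (p : 'rV[R]_5) : 'rV[R]_5 :=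
  'D_(X p) Y p - 'D_(Y p) X p.

End F2.

(* Main.v *)
Require Import Defs.
From HB Require Import structures.
From mathcomp Require Import all_boot all_order all_algebra.
From mathcomp Require Import all_classical all_reals all_analysis.
From mathcomp Require Import ring lra.
Set Implicit Arguments. Unset Strict Implicit. Unset Printing Implicit Defensive.
Import Order.TTheory GRing.Theory Num.Theory.
Import numFieldNormedType.Exports.
Local Open Scope classical_set_scope.
Local Open Scope ring_scope.

Section Alg.
Variable R : realType.
Variables (cf sf ca sa r : R).
Definition u1x := cf * ca + sf * sa.
Definition u1y := sf * ca - cf * sa.
Definition u2x := cf * ca - sf * sa.
Definition u2y := sf * ca + cf * sa.
Definition g1x (vx vy vf vr : R) := vx - vr * cf + r * sf * vf.
Definition g1y (vx vy vf vr : R) := vy - vr * sf - r * cf * vf.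
Definition g2x (vx vy vf vr : R) := vx + vr * cf - r * sf * vf.
Definition g2y (vx vy vf vr : R) := vy + vr * sf + r * cf * vf.
Definition L1 vx vy vf vr := g1x vx vy vf vr * u1y - g1y vx vy vf vr * u1x.
Definition L2 vx vy vf vr := g2x vx vy vf vr * u2y - g2y vx vy vf vr * u2x.
Definition N1 := u1x ^+ 2 + u1y ^+ 2.
Definition N2 := u2x ^+ 2 + u2y ^+ 2.
Definition Df := cf ^+ 2 + sf ^+ 2.
Definition P1 vx vy vf vr := g1x vx vy vf vr * u1x + g1y vx vy vf vr * u1y.
Definition P2 vx vy vf vr := g2x vx vy vf vr * u2x + g2y vx vy vf vr * u2y.
Definition la vx vy vf vr := (P2 vx vy vf vr / N2 - P1 vx vy vf vr / N1) / 2.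
Definition lb vx vy vf vr := (P2 vx vy vf vr / N2 + P1 vx vy vf vr / N1) / (2 * r).
Definition Px (h1x h1y h2x h2y : R) := (h1x + h2x) / 2.
Definition Py (h1x h1y h2x h2y : R) := (h1y + h2y) / 2.
Definition Pr (h1x h1y h2x h2y : R) := ((h2x - h1x) * cf + (h2y - h1y) * sf) / (2 * Df).
Definition Pf (h1x h1y h2x h2y : R) := ((h2y - h1y) * cf - (h2x - h1x) * sf) / (2 * r * Df).
Definition Zx := - (sf * sa). Definition Zy := cf * sa. Definition Zr := ca.
Definition Tx := r * cf * ca. Definition Ty := r * sf * ca. Definition Tf := sa.

End Alg.

Section Ex.
Variable R : realType.

Inductive ex := EC (c : R) | EX (i : 'I_5) | ES (i : 'I_5) | ECo (i : 'I_5)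
  | EA (a b : ex) | EM (a b : ex).

Fixpoint ev (e : ex) (q : 'rV[R]_5) : R :=
  match e with
  | EC c => c
  | EX i => q ord0 i
  | ES i => sin (q ord0 i)
  | ECo i => cos (q ord0 i)
  | EA a b => ev a q + ev b q
  | EM a b => ev a q * ev b q
  end.

Fixpoint dv (v : 'rV[R]_5) (e : ex) : ex :=
  match e with
  | EC c => EC 0
  | EX i => EC (v ord0 i)
  | ES i => EM (ECo i) (EC (v ord0 i))
  | ECo i => EM (EC (-1)) (EM (ES i) (EC (v ord0 i)))
  | EA a b => EA (dv v a) (dv v b)
  | EM a b => EA (EM a (dv v b)) (EM b (dv v a))
  end.

Definition coordL (i : 'I_5) : {linear 'rV[R]_5 -> R}.
by exists (fun N : 'rV[R]_5 => N ord0 i); do 2![eexists]; do ?[constructor];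
     rewrite ?mxE// => ? *; rewrite ?mxE//; move=> ?; rewrite !mxE.
Defined.

Lemma coordL_cont i : continuous (coordL i).
Proof. exact: coord_continuous. Qed.

Lemma diff_coordE i q v : 'd (fun N : 'rV[R]_5 => N ord0 i) q v = v ord0 i.
Proof. by have /(congr1 (fun f => f v)) := diff_lin q (@coordL_cont i). Qed.

Lemma ev_diff e q : differentiable (ev e) q /\ forall v, 'd (ev e) q v = ev (dv v e) q.
Proof.
elim: e q => [c|i|i|i|a iha b ihb|a iha b ihb] q /=.
- split; first exact: differentiable_cst.
  by move=> v; rewrite (diff_cst c q).
- have -> : (fun q : 'rV[R]_5 => q ord0 i) = (coordL i : _ -> _) by [].
  split; first exact/linear_differentiable/coordL_cont.
  by move=> v; rewrite diff_coordE.
- have -> : (fun q : 'rV[R]_5 => sin (q ord0 i)) = sin \o (coordL i : _ -> _) by [].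
  have dc : differentiable (coordL i) q by exact/linear_differentiable/coordL_cont.
  have ds : differentiable (@sin R) (coordL i q) by apply/derivable1_diffP/derivable_sin.
  split; first exact: differentiable_comp.
  move=> v; rewrite diff_comp // /= diff1E // derive1E derive_val.
  by rewrite diff_coordE mulrC.
- have -> : (fun q : 'rV[R]_5 => cos (q ord0 i)) = cos \o (coordL i : _ -> _) by [].
  have dc : differentiable (coordL i) q by exact/linear_differentiable/coordL_cont.
  have ds : differentiable (@cos R) (coordL i q) by apply/derivable1_diffP/derivable_cos.
  split; first exact: differentiable_comp.
  move=> v; rewrite diff_comp // /= diff1E // derive1E derive_val.
  by rewrite diff_coordE -[_ *: _]/(_ * _); ring.
- have [da ea] := iha q; have [db eb] := ihb q.
  have -> : (fun q => ev a q + ev b q) = ev a + ev b by [].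
  split; first exact: differentiableD.
  by move=> v; rewrite diffD // /= ea eb.
- have [da ea] := iha q; have [db eb] := ihb q.
  have -> : (fun q => ev a q * ev b q) = ev a * ev b by [].
  split; first exact: differentiableM.
  by move=> v; rewrite diffM //= -ea -eb.
Qed.

Definition fld n (E : 'I_n -> ex) (q : 'rV[R]_5) : 'rV[R]_n := \row_(j < n) ev (E j) q.

Lemma fld_sum n (E : 'I_n -> ex) :
  fld E = \sum_(j < n) (fun q => ev (E j) q *: (delta_mx 0 j : 'rV[R]_n)).
Proof.
apply/funext => q; rewrite fct_sumE; apply/rowP => k.
rewrite !mxE summxE (bigD1 k) //= big1 => [|j /negbTE jk]; rewrite !mxE.
  by rewrite !eqxx mulr1 addr0.
by rewrite eq_sym jk andbF mulr0.
Qed.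

Lemma fld_diff n (E : 'I_n -> ex) q : differentiable (fld E) q.
Proof.
rewrite fld_sum; apply: differentiable_sum => j.
by apply: differentiableZl; have [] := ev_diff (E j) q.
Qed.

Lemma fld_D n (E : 'I_n -> ex) q v : 'D_v (fld E) q = fld (fun j => dv v (E j)) q.
Proof.
rewrite derive_mx; last exact/diff_derivable/fld_diff.
apply/rowP => k; rewrite !mxE.
have -> : (fun t => fld E t ord0 k) = ev (E k).
  by apply/funext => t; rewrite mxE.
have [d e] := ev_diff (E k) q.
by rewrite deriveE // e.
Qed.

Fixpoint iterE n (vs : seq 'rV[R]_5) (E : 'I_n -> ex) : 'I_n -> ex :=
  if vs is v :: vs' then (fun j => dv v (iterE vs' E j)) else E.

Lemma iterD_fld (vs : seq 'rV[R]_5) (E : 'I_5 -> ex) :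
  Defs.iterD vs (fld E) = fld (@iterE 5 vs E).
Proof.
elim: vs => [|v vs ih] //=; apply/funext => q.
by rewrite ih fld_D.
Qed.

Lemma fld_smooth (E : 'I_5 -> ex) U : smooth_on U (fld E).
Proof. by move=> vs p _; rewrite iterD_fld; exact: fld_diff. Qed.


Definition mk2 (a b : ex) : 'I_2 -> ex := fun j => if val j == 0%N then a else b.
Definition eneg (e : ex) := EM (EC (-1)) e.
Definition EB1 := mk2 (EA (EX i_x) (eneg (EM (EX i_r) (ECo i_phi))))
                      (EA (EX i_y) (eneg (EM (EX i_r) (ES i_phi)))).
Definition EB2 := mk2 (EA (EX i_x) (EM (EX i_r) (ECo i_phi)))
                      (EA (EX i_y) (EM (EX i_r) (ES i_phi))).

Lemma B1E : @B1 R = fld EB1.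
Proof.
apply/funext => q; apply/rowP => j; rewrite !mxE /Defs.coord /EB1 /mk2.
by case: (val j == 0%N) => /=; ring.
Qed.

Lemma B2E : @B2 R = fld EB2.
Proof.
apply/funext => q; apply/rowP => j; rewrite !mxE /Defs.coord /EB2 /mk2.
by case: (val j == 0%N) => /=; ring.
Qed.

Lemma DistE (p v : 'rV[R]_5) :
  let cf := cos (p ord0 i_phi) in let sf := sin (p ord0 i_phi) in
  let ca := cos (p ord0 i_alpha) in let sa := sin (p ord0 i_alpha) in
  let r := p ord0 i_r in
  Dist p v <-> (L1 cf sf ca sa r (v ord0 i_x) (v ord0 i_y) (v ord0 i_phi) (v ord0 i_r) = 0 /\
                L2 cf sf ca sa r (v ord0 i_x) (v ord0 i_y) (v ord0 i_phi) (v ord0 i_r) = 0).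
Proof.
move=> cf sf ca sa r.
rewrite /Dist /parallel B1E B2E !fld_D /cross2 /u1 /u2 !mxE /Defs.coord /=.
rewrite cosB sinB cosD sinD.
rewrite /L1 /L2 /g1x /g1y /g2x /g2y /u1x /u1y /u2x /u2y /cf /sf /ca /sa /r.
match goal with |- (?a = 0 /\ ?b = 0) <-> (?c = 0 /\ ?d = 0) =>
  have -> : a = c by ring end.
match goal with |- (?a = 0 /\ ?b = 0) <-> (?c = 0 /\ ?d = 0) =>
  have -> : b = d by ring end.
by [].
Qed.


Lemma decomp (cf sf ca sa r vx vy vf vr : R) :
  r != 0 -> Df cf sf != 0 -> N1 cf sf ca sa != 0 -> N2 cf sf ca sa != 0 ->
  L1 cf sf ca sa r vx vy vf vr = 0 -> L2 cf sf ca sa r vx vy vf vr = 0 ->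
  [/\ vx = la cf sf ca sa r vx vy vf vr * Zx sf sa + lb cf sf ca sa r vx vy vf vr * Tx cf ca r,
      vy = la cf sf ca sa r vx vy vf vr * Zy cf sa + lb cf sf ca sa r vx vy vf vr * Ty sf ca r,
      vf = lb cf sf ca sa r vx vy vf vr * Tf sa &
      vr = la cf sf ca sa r vx vy vf vr * Zr ca].
Proof.
move=> hr hD h1 h2 e1 e2.
set a := la _ _ _ _ _ _ _ _ _; set b := lb _ _ _ _ _ _ _ _ _.
pose l1 := L1 cf sf ca sa r vx vy vf vr / N1 cf sf ca sa.
pose l2 := L2 cf sf ca sa r vx vy vf vr / N2 cf sf ca sa.
have z1 : l1 = 0 by rewrite /l1 e1 mul0r.
have z2 : l2 = 0 by rewrite /l2 e2 mul0r.
move: h1 h2 hD; rewrite /N1 /N2 /Df /u1x /u1y /u2x /u2y => h1 h2 hD.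
Ltac unf := rewrite /la /lb /L1 /L2 /P1 /P2 /N1 /N2 /Px /Py /Pr /Pf /Df /Zx /Zy /Zr /Tx /Ty /Tf /g1x /g1y /g2x /g2y /u1x /u1y /u2x /u2y.
Ltac fs h1 h2 hD hr := field; rewrite ?h1 ?h2 ?hD ?hr ?andbT ?andTb //.
split.
- have -> : vx = a * Zx sf sa + b * Tx cf ca r + l1 * Px (u1y cf sf ca sa) (- u1x cf sf ca sa) 0 0
     + l2 * Px 0 0 (u2y cf sf ca sa) (- u2x cf sf ca sa).
    rewrite /a /b /l1 /l2; unf; fs h1 h2 hD hr.
  by rewrite z1 z2 !mul0r !addr0.
- have -> : vy = a * Zy cf sa + b * Ty sf ca r + l1 * Py (u1y cf sf ca sa) (- u1x cf sf ca sa) 0 0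
     + l2 * Py 0 0 (u2y cf sf ca sa) (- u2x cf sf ca sa).
    rewrite /a /b /l1 /l2; unf; fs h1 h2 hD hr.
  by rewrite z1 z2 !mul0r !addr0.
- have -> : vf = b * Tf sa + l1 * Pf cf sf r (u1y cf sf ca sa) (- u1x cf sf ca sa) 0 0
     + l2 * Pf cf sf r 0 0 (u2y cf sf ca sa) (- u2x cf sf ca sa).
    rewrite /a /b /l1 /l2; unf; fs h1 h2 hD hr.
  by rewrite z1 z2 !mul0r !addr0.
- have -> : vr = a * Zr ca + l1 * Pr cf sf (u1y cf sf ca sa) (- u1x cf sf ca sa) 0 0
     + l2 * Pr cf sf 0 0 (u2y cf sf ca sa) (- u2x cf sf ca sa).
    rewrite /a /b /l1 /l2; unf; fs h1 h2 hD hr.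
  by rewrite z1 z2 !mul0r !addr0.
Qed.


Definition dd (j : 'I_5) (m : nat) : R := if val j == m then 1 else 0.

Definition Bmat (cf sf ca sa r : R) : 'M[R]_(3, 5) :=
  \matrix_(i < 3, j < 5) nth 0 (nth [::] [:: [:: Zx sf sa; Zy cf sa; 0; Zr ca; 0];
                                          [:: Tx cf ca r; Ty sf ca r; Tf sa; 0; 0];
                                          [:: 0; 0; 0; 0; 1]] i) j.

Definition Binv (cf sf ca sa r : R) : 'M[R]_(5, 3) :=
  \matrix_(j < 5, k < 3) nth 0 [:: la cf sf ca sa r (dd j 0) (dd j 1) (dd j 2) (dd j 3);
                                  lb cf sf ca sa r (dd j 0) (dd j 1) (dd j 2) (dd j 3);
                                  dd j 4] k.

Lemma trig_facts (f a : R) :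
  [/\ Df (cos f) (sin f) = 1, N1 (cos f) (sin f) (cos a) (sin a) = 1 &
      N2 (cos f) (sin f) (cos a) (sin a) = 1].
Proof.
have hf := cos2Dsin2 f; have ha := cos2Dsin2 a.
split; first by rewrite /Df.
- rewrite /N1 /u1x /u1y; transitivity ((cos f ^+ 2 + sin f ^+ 2) * (cos a ^+ 2 + sin a ^+ 2)).
    by ring.
  by rewrite hf ha mulr1.
- rewrite /N2 /u2x /u2y; transitivity ((cos f ^+ 2 + sin f ^+ 2) * (cos a ^+ 2 + sin a ^+ 2)).
    by ring.
  by rewrite hf ha mulr1.
Qed.

Lemma part1 (p : 'rV[R]_5) : F2dom p ->
  exists B : 'M[R]_(3, 5), row_free B /\ (forall v : 'rV[R]_5, Dist p v <-> (v <= B)%MS).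
Proof.
rewrite /F2dom /Defs.coord /= => hp.
set cf := cos (p ord0 i_phi); set sf := sin (p ord0 i_phi).
set ca := cos (p ord0 i_alpha); set sa := sin (p ord0 i_alpha).
set r := p ord0 i_r.
have hr : r != 0 by rewrite /r gt_eqF.
have [eD e1 e2] := trig_facts (p ord0 i_phi) (p ord0 i_alpha).
have hD : Df cf sf != 0 by rewrite /cf /sf eD oner_neq0.
have h1 : N1 cf sf ca sa != 0 by rewrite /cf /sf /ca /sa e1 oner_neq0.
have h2 : N2 cf sf ca sa != 0 by rewrite /cf /sf /ca /sa e2 oner_neq0.
exists (Bmat cf sf ca sa r); split.
  apply/row_freeP; exists (Binv cf sf ca sa r).
  move: h1 h2 hD; rewrite /N1 /N2 /Df /u1x /u1y /u2x /u2y => h1 h2 hD.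
  apply/matrixP => i k; rewrite !mxE !big_ord_recr big_ord0 /= !mxE /=.
  rewrite /dd /=.
  case: i => [[|[|[|i]]] hi] //; case: k => [[|[|[|k]]] hk] //= ; unf; fs h1 h2 hD hr.
move=> v; rewrite DistE; split.
  case=> l1 l2.
  have [ex ey ef er] := decomp hr hD h1 h2 l1 l2.
  apply/submxP; exists (\row_(i < 3) nth 0 [:: la cf sf ca sa r (v ord0 i_x) (v ord0 i_y) (v ord0 i_phi) (v ord0 i_r);
                                          lb cf sf ca sa r (v ord0 i_x) (v ord0 i_y) (v ord0 i_phi) (v ord0 i_r);
                                          v ord0 i_alpha] i).
  apply/rowP => j; rewrite !mxE !big_ord_recr big_ord0 /= !mxE /=.
  case: j => [[|[|[|[|[|j]]]]] hj] //=.
  - rewrite (_ : Ordinal hj = i_x); last exact: val_inj.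
    by rewrite [X in X = _]ex; ring.
  - rewrite (_ : Ordinal hj = i_y); last exact: val_inj.
    by rewrite [X in X = _]ey; ring.
  - rewrite (_ : Ordinal hj = i_phi); last exact: val_inj.
    by rewrite [X in X = _]ef; ring.
  - rewrite (_ : Ordinal hj = i_r); last exact: val_inj.
    by rewrite [X in X = _]er; ring.
  - rewrite (_ : Ordinal hj = i_alpha); last exact: val_inj.
    by ring.
case/submxP => D ->.
rewrite !mxE !big_ord_recr !big_ord0 /= !mxE /=.
rewrite /L1 /L2 /g1x /g1y /g2x /g2y /u1x /u1y /u2x /u2y /Zx /Zy /Zr /Tx /Ty /Tf. rewrite /cf /sf /ca /sa /r; split; ring.
Qed.


Definition mk5 (a b c d e : ex) : 'I_5 -> ex := fun j => nth (EC 0) [:: a; b; c; d; e] j.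
Notation cF := (ECo i_phi). Notation sF := (ES i_phi).
Notation cA := (ECo i_alpha). Notation sA := (ES i_alpha).
Notation rr := (EX i_r).
Definition EZa := mk5 (eneg (EM (EM sF sA) cA)) (EM (EM cF sA) cA) (EC 0) (EM cA cA) (EC 0).
Definition EZb := mk5 (eneg (EM (EM sF sA) sA)) (EM (EM cF sA) sA) (EC 0) (EM cA sA) (EC 0).
Definition ETa := mk5 (EM (EM (EM rr cF) cA) cA) (EM (EM (EM rr sF) cA) cA) (EM sA cA) (EC 0) (EC 0).
Definition ETb := mk5 (EM (EM (EM rr cF) cA) sA) (EM (EM (EM rr sF) cA) sA) (EM sA sA) (EC 0) (EC 0).
Definition Econ := mk5 (EC 0) (EC 0) (EC 0) (EC 0) (EC 1).

Lemma shiftE (p : 'rV[R]_5) (c : R) k j :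
  (p + c *: unitvec R k) ord0 j = p ord0 j + (if j == k then c else 0).
Proof. by rewrite !mxE; case: (j == k); rewrite ?mulr1n ?mulr0n ?mulr1 ?mulr0. Qed.

Lemma twopi : 2 * pi = pi *+ 2 :> R.
Proof. by rewrite mulr_natl. Qed.

Ltac desc := let q := fresh "q" in intro q; split; apply/rowP;
  case => [[|[|[|[|[|?]]]]] ?] //=; rewrite !mxE /=;
  rewrite ?(shiftE q) /= ?addr0 ?twopi ?sinD2pi ?cosD2pi ?sinDpi ?cosDpi; ring.
Ltac tang := split; [exact: fld_smooth | desc
  | move=> ? _; rewrite DistE !mxE /=;
    rewrite /L1 /L2 /g1x /g1y /g2x /g2y /u1x /u1y /u2x /u2y; split; ring].

Lemma tZa : tangent_to_D (fld EZa). Proof. tang. Qed.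
Lemma tZb : tangent_to_D (fld EZb). Proof. tang. Qed.
Lemma tTa : tangent_to_D (fld ETa). Proof. tang. Qed.
Lemma tTb : tangent_to_D (fld ETb). Proof. tang. Qed.
Lemma tE : tangent_to_D (fld Econ). Proof. tang. Qed.


End Ex.

Section P2.
Variable R : realType.
Local Notation Econ := (@Econ R).
Local Notation EZa := (@EZa R).
Local Notation EZb := (@EZb R).
Local Notation ETa := (@ETa R).
Local Notation ETb := (@ETb R).
Notation cF := (ECo i_phi). Notation sF := (ES i_phi).
Notation cA := (ECo i_alpha). Notation sA := (ES i_alpha).
Notation rr := (EX i_r).
Definition Xs (i : 'I_9) := fld (nth Econ [:: EZa; EZb; ETa; ETb; Econ; Econ; Econ; Econ; Econ] i).
Definition Ys (i : 'I_9) := fld (nth Econ [:: Econ; Econ; Econ; Econ; Econ; EZa; EZb; ETa; ETb] i).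
Definition bs (i : 'I_9) := (i < 5)%N.

Definition coefs (cf sf ca sa r wx wy wf wr wa : R) : seq R :=
  let Da := ca ^+ 2 + sa ^+ 2 in let Dp := cf ^+ 2 + sf ^+ 2 in
  let Kn := (- sf * wx + cf * wy) / Dp in let Km := (cf * wx + sf * wy) / Dp in
  [:: (Kn * sa * ca + wr * ca ^+ 2) / Da ^+ 2;
      (Kn * sa ^+ 2 + wr * ca * sa) / Da ^+ 2;
      (wf * sa * ca + Km * ca ^+ 2 / r) / Da ^+ 2;
      (wf * sa ^+ 2 + Km * ca * sa / r) / Da ^+ 2;
      wa;
      (Kn * ca ^+ 2 - wr * sa * ca) / Da ^+ 2;
      (Kn * ca * sa - wr * sa ^+ 2) / Da ^+ 2;
      (wf * ca ^+ 2 - Km * sa * ca / r) / Da ^+ 2;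
      (wf * ca * sa - Km * sa ^+ 2 / r) / Da ^+ 2].

Lemma part2 (p : 'rV[R]_5) : F2dom p -> forall w : 'rV[R]_5,
  exists (n : nat) (c : 'I_n -> R) (b : 'I_n -> bool)
         (X Y : 'I_n -> 'rV[R]_5 -> 'rV[R]_5),
    (forall i, tangent_to_D (X i) /\ tangent_to_D (Y i)) /\
    w = \sum_(i < n) c i *: (if b i then X i p else lie (X i) (Y i) p).
Proof.
rewrite /F2dom /Defs.coord /= => hp w.
have hr : p ord0 i_r != 0 by rewrite gt_eqF.
have hf := cos2Dsin2 (p ord0 i_phi); have ha := cos2Dsin2 (p ord0 i_alpha).
have hDf : cos (p ord0 i_phi) ^+ 2 + sin (p ord0 i_phi) ^+ 2 != 0 by rewrite hf oner_neq0.
have hDa : cos (p ord0 i_alpha) ^+ 2 + sin (p ord0 i_alpha) ^+ 2 != 0 by rewrite ha oner_neq0.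
exists 9%N, (fun i => nth 0 (coefs (cos (p ord0 i_phi)) (sin (p ord0 i_phi))
   (cos (p ord0 i_alpha)) (sin (p ord0 i_alpha)) (p ord0 i_r)
   (w ord0 i_x) (w ord0 i_y) (w ord0 i_phi) (w ord0 i_r) (w ord0 i_alpha)) i), bs, Xs, Ys.
split.
  case=> [[|[|[|[|[|[|[|[|[|i]]]]]]]]] hi] //; rewrite /Xs /Ys /=;
    split; (exact: tZa || exact: tZb || exact: tTa || exact: tTb || exact: tE).
apply/rowP => j; rewrite summxE !big_ord_recr big_ord0.
rewrite /Xs /Ys /bs /lie /= !fld_D.
case: j => [[|[|[|[|[|j]]]]] hj] //.
- rewrite (_ : Ordinal hj = i_x); last exact: val_inj.
  rewrite !mxE /= ?mxE /=; rewrite -[w 0 i_x]/(w ord0 i_x).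
  field; rewrite ?hDf ?hDa ?hr //.
- rewrite (_ : Ordinal hj = i_y); last exact: val_inj.
  rewrite !mxE /= ?mxE /=; rewrite -[w 0 i_y]/(w ord0 i_y).
  field; rewrite ?hDf ?hDa ?hr //.
- rewrite (_ : Ordinal hj = i_phi); last exact: val_inj.
  rewrite !mxE /= ?mxE /=; rewrite -[w 0 i_phi]/(w ord0 i_phi).
  field; rewrite ?hDf ?hDa ?hr //.
- rewrite (_ : Ordinal hj = i_r); last exact: val_inj.
  rewrite !mxE /= ?mxE /=; rewrite -[w 0 i_r]/(w ord0 i_r).
  field; rewrite ?hDf ?hDa ?hr //.
- rewrite (_ : Ordinal hj = i_alpha); last exact: val_inj.
  rewrite !mxE /= ?mxE /=; rewrite -[w 0 i_alpha]/(w ord0 i_alpha).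
  field; rewrite ?hDf ?hDa ?hr //.
Qed.

End P2.

Theorem theorem5p1 (R : realType) :
  (* rank 3: at every point, D(p) is the row space of a row-free 3x5 matrix *)
  (forall p : 'rV[R]_5, F2dom p ->
     exists B : 'M[R]_(3, 5),
       row_free B /\ (forall v : 'rV[R]_5, Dist p v <-> (v <= B)%MS))
  /\
  (* bracket generating of step 2: values of fields tangent to D and of their
     first commutators span the tangent space at every point *)
  (forall p : 'rV[R]_5, F2dom p ->
     forall w : 'rV[R]_5,
       exists (n : nat) (c : 'I_n -> R) (b : 'I_n -> bool)
              (X Y : 'I_n -> 'rV[R]_5 -> 'rV[R]_5),
         (forall i, tangent_to_D (X i) /\ tangent_to_D (Y i)) /\
         w = \sum_(i < n) c i *: (if b i then X i p else lie (X i) (Y i) p)).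
Proof.
split; [exact: part1 | exact: part2].
Qed.
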